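(* $WS(6) \geq 646$; that is, $\{1,\dots,646\}$ can be partitioned into $6$ weakly sum-free subsets.
   Context: A set $B\subseteq\mathbb{N}$ is weakly sum-free if for all $(a,b)\in B^2$ with $a\neq b$, $a+b\notin B$. $WS(n)$ is the largest $p$ such that $\{1,\dots,p\}$ can be partitioned into $n$ weakly sum-free subsets. *)

(* Defs.v *)
From mathcomp Require Import all_boot.
Set Implicit Arguments. Unset Strict Implicit. Unset Printing Implicit Defensive.

Definition weakly_sum_free (B : nat -> Prop) : Prop :=
  forall a b : nat, B a -> B b -> a <> b -> ~ B (a + b).

(* {1,...,p} can be partitioned into n weakly sum-free subsets:
   a map c assigning to each x in {1..p} a block c x : 'I_n (the blocks are
   the fibres, possibly empty), each block being weakly sum-free. *)
Definition WS_partitionable (n p : nat) : Prop :=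
  exists c : nat -> 'I_n,
    forall i : 'I_n,
      weakly_sum_free (fun x => 1 <= x <= p /\ c x = i).

(* Main.v *)
Require Import Defs.
From mathcomp Require Import all_boot zify.
From Stdlib Require Import Lia.

Definition tab : seq nat := [:: 4;0;1;1;0;5;5;4;0;1;1;0;4;5;4;0;1;1;0;4;3;4;0;1;1;0;4;5;5;0;1;1;5;4;3;4;5;1;1;3;4;3;3;3;1;1;3;4;3;3;3;1;1;3;4;5;3;3;1;1;1;4;0;5;4;1;1;5;4;0;0;4;1;1;1;4;0;0;4;1;1;1;4;0;0;4;1;1;1;4;0;0;4;1;1;1;4;0;0;4;1;1;1;4;0;0;4;1;1;1;4;0;0;4;1;1;1;4;0;0;4;1;1;1;4;0;0;4;1;1;1;4;3;5;4;3;1;1;4;3;3;4;3;1;1;4;3;3;4;3;1;1;4;2;3;4;5;1;1;4;5;2;4;0;1;1;4;2;5;4;0;1;1;4;2;2;4;0;1;1;4;2;2;4;0;1;1;4;2;2;4;0;1;1;4;2;2;4;0;1;1;4;2;2;4;0;1;1;4;2;2;4;0;1;5;4;2;2;5;0;1;1;5;2;2;4;5;5;3;4;5;2;3;3;1;3;3;3;2;3;3;3;3;3;3;2;3;3;3;5;3;3;2;5;2;3;0;5;4;2;2;5;2;0;0;5;2;2;2;5;0;0;4;2;2;2;2;0;0;4;2;2;2;2;0;0;4;2;2;2;2;0;0;4;2;2;2;2;0;0;4;2;2;2;2;0;0;4;2;2;2;2;0;0;4;5;2;2;2;5;0;4;2;2;2;2;3;5;4;3;2;2;2;3;3;4;3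;3;2;2;3;3;4;3;3;2;2;2;3;4;5;3;2;2;5;2;4;0;5;2;2;2;5;4;0;0;2;2;2;2;4;0;0;2;2;2;2;4;0;0;2;2;2;2;4;0;0;2;2;2;2;4;0;0;2;2;2;2;4;0;0;2;2;2;2;4;0;0;5;2;2;2;5;0;0;2;5;2;2;4;5;5;3;2;5;2;3;3;3;3;3;3;2;3;3;3;3;3;3;2;3;3;3;1;3;3;2;2;4;1;1;5;4;2;2;5;5;1;0;5;2;2;4;1;1;0;4;2;2;4;1;1;0;4;2;2;4;1;1;0;4;2;2;4;1;1;0;4;2;2;4;1;1;0;4;2;2;4;1;1;0;4;2;2;4;1;1;0;4;5;2;4;1;1;0;4;2;5;4;1;1;3;4;3;2;4;1;1;5;4;3;3;4;1;1;3;4;3;3;4;1;1;1;4;5;3;4;1;1;3;4;0;5;4;1;1;1;4;0;0;4;1;1;5;4;0;0;4;1;1;1;4;0;0;4;1;1;1;4;0;0;4;1;1;1;4;0;0;4;1;1;1;4;0;0;4;1;1;1;4;0;0;5;5;1;1;5;0;0;4;1;1;1;4;5;0;3;3;1;1;3;3;5;3;3;1;1;3;3;3;3;3;1;1;3;3;3;5;4;1;1;5;4;3;4;5].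

Fixpoint check_a (ca : nat) (l1 l2 : seq nat) : bool :=
  match l1, l2 with
  | x :: l1', y :: l2' => ~~ ((ca == x) && (x == y)) && check_a ca l1' l2'
  | _, _ => true
  end.

Definition allcheck : bool :=
  all (fun a => check_a (nth 0 tab a.-1) (drop a tab) (drop a.*2 tab)) (iota 1 646).

Lemma allcheck_ok : allcheck = true.
Proof. vm_compute. reflexivity. Qed.

Lemma tab_bound : all (fun v => v < 6) tab = true.
Proof. vm_compute. reflexivity. Qed.

Lemma tab_size : size tab = 646.
Proof. vm_compute. reflexivity. Qed.

Lemma check_aP ca l1 l2 j : check_a ca l1 l2 -> j < size l1 -> j < size l2 ->
  ~~ ((ca == nth 0 l1 j) && (nth 0 l1 j == nth 0 l2 j)).
Proof.
elim: l1 l2 j => [|x l1 IH] [|y l2] [|j] //=.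
- by case/andP.
- by move=> /andP[_ H] Hj1 Hj2; apply: IH.
Qed.

Definition col (x : nat) : 'I_6 := inord (nth 0 tab x.-1).

Lemma colE x : 1 <= x <= 646 -> nat_of_ord (col x) = nth 0 tab x.-1.
Proof.
move=> /andP[H1 H2]; rewrite /col inordK //.
have /allP := tab_bound; apply; apply: mem_nth; rewrite tab_size.
by case: x H1 H2.
Qed.

Lemma key a b : 1 <= a -> a < b -> a + b <= 646 ->
  ~~ ((nth 0 tab a.-1 == nth 0 tab b.-1) && (nth 0 tab b.-1 == nth 0 tab (a + b).-1)).
Proof.
move=> Ha Hab Hs.
have Hin : a \in iota 1 646 by rewrite mem_iota; lia.
have AC := allcheck_ok; rewrite /allcheck in AC.
move: (@check_aP _ _ _ (b - a).-1 (allP AC a Hin)).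
rewrite !size_drop !nth_drop tab_size.
have e1 : a + (b - a).-1 = b.-1 by lia.
have e2 : a.*2 + (b - a).-1 = (a + b).-1 by rewrite -addnn; lia.
rewrite e1 e2; apply; lia.
Qed.

Theorem mainTheorem17 : WS_partitionable 6 646.
Proof.
exists col => i a b [Ha Ca] [Hb Cb] Hab [Hs Cs].
have Ea := @colE a Ha; have Eb := @colE b Hb; have Es := @colE (a + b) Hs.
have Va : nth 0 tab a.-1 = i by rewrite -Ea Ca.
have Vb : nth 0 tab b.-1 = i by rewrite -Eb Cb.
have Vs : nth 0 tab (a + b).-1 = i by rewrite -Es Cs.
case/andP: Ha => Ha1 _; case/andP: Hb => Hb1 _; case/andP: Hs => _ Hs2.
case: (ltngtP a b) => [lt|gt|eq]; last by [].
- by move: (@key a b Ha1 lt Hs2); rewrite Va Vb Vs !eqxx.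
- by move: (@key b a Hb1 gt (ltac:(by rewrite addnC))); rewrite addnC Va Vb Vs !eqxx.
Qed.
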